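(* Let $\mathcal{L}=(\mathrm{Fm},\vdash)$ be a logic for which $\wedge_P$, $\vee_S$, $\bot_P$ and $\top_W$ hold, and let $N\subseteq\mathrm{Fm}\times\mathrm{Fm}$ be a normative system. For $1\le i\le4$ let $P_i=P_{N_i}$ and $P_i^c=(\mathrm{Fm}\times\mathrm{Fm})\setminus P_i$. Then $P_1^c$ is closed under $(\top)^{\rhd},(\mathrm{SI})^{\rhd},(\mathrm{WO})^{\rhd},(\mathrm{AND})^{\rhd}$; $P_2^c$ is closed under these and $(\mathrm{OR})^{\rhd}$; $P_3^c$ is closed under $(\top)^{\rhd},(\mathrm{SI})^{\rhd},(\mathrm{WO})^{\rhd},(\mathrm{AND})^{\rhd},(\mathrm{CT})^{\rhd}$; $P_4^c$ is closed under $(\top)^{\rhd},(\mathrm{SI})^{\rhd},(\mathrm{WO})^{\rhd},(\mathrm{AND})^{\rhd},(\mathrm{OR})^{\rhd},(\mathrm{CT})^{\rhd}$, where in $(\mathrm{CT})^{\rhd}$ for $P_i^c$ the normative system referred to is $N_i$.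
   Context: Logic $\mathcal{L}=(\mathrm{Fm},\vdash)$ with consequence relation $\vdash$; $Cn(\Gamma)=\{\psi\mid\Gamma\vdash\psi\}$, $Cn(\varphi,\psi)=Cn(\{\varphi,\psi\})$. $\wedge_P$: a binary term $\wedge$ with $Cn(\varphi\wedge\psi)=Cn(\{\varphi,\psi\})$; $\vee_S$: a binary term $\vee$ with $Cn(\Gamma,\varphi\vee\psi)=Cn(\Gamma\cup\{\varphi\})\cap Cn(\Gamma\cup\{\psi\})$ for all $\Gamma$; $\bot_P$: a constant $\bot$ with $Cn(\{\bot\})=\mathrm{Fm}$; $\top_W$: a constant $\top$ with $\top\in Cn(\{\varphi\})$ for all $\varphi$. Rules on a normative system $N$: $(\top)$: $(\top,\top)\in N$; (SI): $(\alpha,\varphi)\in N,\beta\vdash\alpha\Rightarrow(\beta,\varphi)\in N$; (WO): $(\alpha,\varphi)\in N,\varphi\vdash\psi\Rightarrow(\alpha,\psi)\in N$; (AND): $(\alpha,\varphi),(\alpha,\psi)\in N\Rightarrow(\alpha,\varphi\wedge\psi)\in N$; (OR): $(\alpha,\varphi),(\beta,\varphi)\in N\Rightarrow(\alpha\vee\beta,\varphi)\in N$; (CT): $(\alpha,\varphi),(\alpha\wedge\varphi,\psi)\in N\Rightarrow(\alpha,\psi)\in N$. $N_i$ is the smallest extension of $N$ closed under: $N_1$: $(\top)$,(SI),(WO),(AND); $N_2$: these and (OR); $N_3$: $(\top)$,(SI),(WO),(AND),(CT); $N_4$: all of $(\top)$,(SI),(WO),(AND),(OR),(CT). For a normative system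 $M$, $P_M=\{(\alpha,\varphi)\mid\forall\psi((\alpha,\psi)\in M\Rightarrow Cn(\varphi,\psi)\neq\mathrm{Fm})\}$. Rules on a relation $R$ (relative to a normative system $M$): $(\top)^{\rhd}$: $(\top,\bot)\in R$; $(\mathrm{SI})^{\rhd}$: $(\beta,\varphi)\in R,\alpha\vdash\beta\Rightarrow(\alpha,\varphi)\in R$; $(\mathrm{WO})^{\rhd}$: $(\alpha,\psi)\in R,\varphi\vdash\psi\Rightarrow(\alpha,\varphi)\in R$; $(\mathrm{AND})^{\rhd}$: $(\alpha,\varphi),(\alpha,\psi)\in R\Rightarrow(\alpha,\varphi\vee\psi)\in R$; $(\mathrm{OR})^{\rhd}$: $(\alpha,\varphi),(\beta,\varphi)\in R\Rightarrow(\alpha\vee\beta,\varphi)\in R$; $(\mathrm{CT})^{\rhd}$: $(\alpha,\varphi)\in M,(\alpha\wedge\varphi,\psi)\in R\Rightarrow(\alpha,\psi)\in R$. *)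

(* Defs.v *)
Set Implicit Arguments.

Record Logic := {
  Fm : Type;
  cons : (Fm -> Prop) -> Fm -> Prop;
  cons_refl : forall (G : Fm -> Prop) phi, G phi -> cons G phi;
  cons_mono : forall (G H : Fm -> Prop) phi,
      (forall x, G x -> H x) -> cons G phi -> cons H phi;
  cons_cut : forall (G H : Fm -> Prop) phi,
      (forall x, H x -> cons G x) -> cons H phi -> cons G phi
}.

Section Defs.
Variable L : Logic.
Notation Fm := (Fm L).

Definition single (a : Fm) : Fm -> Prop := fun x => x = a.
Definition pair (a b : Fm) : Fm -> Prop := fun x => x = a \/ x = b.
Definition addf (G : Fm -> Prop) (a : Fm) : Fm -> Prop := fun x => G x \/ x = a.

Definition Cn (G : Fm -> Prop) : Fm -> Prop := fun psi => cons L G psi.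
Definition ent1 (b a : Fm) : Prop := cons L (single b) a.

Definition conj_P (and_ : Fm -> Fm -> Fm) : Prop :=
  forall phi psi chi, Cn (single (and_ phi psi)) chi <-> Cn (pair phi psi) chi.
Definition disj_S (or_ : Fm -> Fm -> Fm) : Prop :=
  forall (G : Fm -> Prop) phi psi chi,
    Cn (addf G (or_ phi psi)) chi <-> (Cn (addf G phi) chi /\ Cn (addf G psi) chi).
Definition bot_P (bot : Fm) : Prop := forall chi, Cn (single bot) chi.
Definition top_W (top : Fm) : Prop := forall phi, Cn (single phi) top.

Variables (and_ or_ : Fm -> Fm -> Fm) (bot top : Fm).

Definition rule_top (M : Fm -> Fm -> Prop) : Prop := M top top.
Definition rule_SI (M : Fm -> Fm -> Prop) : Prop :=
  forall a b phi, M a phi -> ent1 b a -> M b phi.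
Definition rule_WO (M : Fm -> Fm -> Prop) : Prop :=
  forall a phi psi, M a phi -> ent1 phi psi -> M a psi.
Definition rule_AND (M : Fm -> Fm -> Prop) : Prop :=
  forall a phi psi, M a phi -> M a psi -> M a (and_ phi psi).
Definition rule_OR (M : Fm -> Fm -> Prop) : Prop :=
  forall a b phi, M a phi -> M b phi -> M (or_ a b) phi.
Definition rule_CT (M : Fm -> Fm -> Prop) : Prop :=
  forall a phi psi, M a phi -> M (and_ a phi) psi -> M a psi.

Definition closed1 M := rule_top M /\ rule_SI M /\ rule_WO M /\ rule_AND M.
Definition closed2 M := closed1 M /\ rule_OR M.
Definition closed3 M := closed1 M /\ rule_CT M.
Definition closed4 M := closed1 M /\ rule_OR M /\ rule_CT M.

Definition closure (closed : (Fm -> Fm -> Prop) -> Prop) (N : Fm -> Fm -> Prop)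
  : Fm -> Fm -> Prop :=
  fun a phi => forall M : Fm -> Fm -> Prop,
    (forall x y, N x y -> M x y) -> closed M -> M a phi.

Definition N1 N := closure closed1 N.
Definition N2 N := closure closed2 N.
Definition N3 N := closure closed3 N.
Definition N4 N := closure closed4 N.

Definition PM (M : Fm -> Fm -> Prop) : Fm -> Fm -> Prop :=
  fun a phi => forall psi, M a psi -> ~ (forall chi, Cn (pair phi psi) chi).
Definition PMc (M : Fm -> Fm -> Prop) : Fm -> Fm -> Prop :=
  fun a phi => ~ PM M a phi.

Definition drule_top (R : Fm -> Fm -> Prop) : Prop := R top bot.
Definition drule_SI (R : Fm -> Fm -> Prop) : Prop :=
  forall a b phi, R b phi -> ent1 a b -> R a phi.
Definition drule_WO (R : Fm -> Fm -> Prop) : Prop :=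
  forall a phi psi, R a psi -> ent1 phi psi -> R a phi.
Definition drule_AND (R : Fm -> Fm -> Prop) : Prop :=
  forall a phi psi, R a phi -> R a psi -> R a (or_ phi psi).
Definition drule_OR (R : Fm -> Fm -> Prop) : Prop :=
  forall a b phi, R a phi -> R b phi -> R (or_ a b) phi.
Definition drule_CT (M R : Fm -> Fm -> Prop) : Prop :=
  forall a phi psi, M a phi -> R (and_ a phi) psi -> R a psi.

End Defs.

(* Main.v *)
Require Import Defs.
From Stdlib Require Import Classical.

Section S.
Variable L : Logic.
Variables (and_ or_ : Fm L -> Fm L -> Fm L) (bot top : Fm L).
Hypothesis HandP : conj_P L and_.
Hypothesis HorS : disj_S L or_.
Hypothesis HbotP : bot_P L bot.
Hypothesis HtopW : top_W L top.

Definition inc (p q : Fm L) := forall chi, Cn L (pair L p q) chi.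

Lemma PMc_ex M a phi : PMc L M a phi -> exists psi, M a psi /\ inc phi psi.
Proof.
  unfold PMc, PM; intro H. apply NNPP; intro H2. apply H; intros psi Hm Hi.
  apply H2; exists psi; split; auto.
Qed.

Lemma ex_PMc M a phi psi : M a psi -> inc phi psi -> PMc L M a phi.
Proof. unfold PMc, PM; intros Hm Hi H. exact (H psi Hm Hi). Qed.

Section Cl.
Variable closed : (Fm L -> Fm L -> Prop) -> Prop.
Variable N : Fm L -> Fm L -> Prop.
Let C := closure L closed N.

Lemma cl_top : (forall M, closed M -> rule_top L top M) -> C top top.
Proof. intros P M _ HC. exact (P M HC). Qed.
Lemma cl_SI : (forall M, closed M -> rule_SI L M) -> rule_SI L C.
Proof. intros P a b phi H He M HN HC. eapply (P M HC); [apply H|]; eauto. Qed.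
Lemma cl_WO : (forall M, closed M -> rule_WO L M) -> rule_WO L C.
Proof. intros P a phi psi H He M HN HC. eapply (P M HC); [apply H|]; eauto. Qed.
Lemma cl_AND : (forall M, closed M -> rule_AND L and_ M) -> rule_AND L and_ C.
Proof. intros P a phi psi H1 H2 M HN HC. eapply (P M HC); [apply H1|apply H2]; eauto. Qed.
Lemma cl_OR : (forall M, closed M -> rule_OR L or_ M) -> rule_OR L or_ C.
Proof. intros P a b phi H1 H2 M HN HC. eapply (P M HC); [apply H1|apply H2]; eauto. Qed.
Lemma cl_CT : (forall M, closed M -> rule_CT L and_ M) -> rule_CT L and_ C.
Proof. intros P a phi psi H1 H2 M HN HC. eapply (P M HC); [apply H1|apply H2]; eauto. Qed.
End Cl.

Section R.
Variable M : Fm L -> Fm L -> Prop.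
Let R := PMc L M.

Lemma d_top : M top top -> drule_top L bot top R.
Proof.
  intro H. apply (ex_PMc M top bot top H). intro chi.
  apply (cons_mono L (single L bot)). { intros x Hx; left; exact Hx. } apply HbotP.
Qed.

Lemma d_SI : rule_SI L M -> drule_SI L R.
Proof.
  intros HS a b phi H He. destruct (PMc_ex _ _ _ H) as [psi [Hm Hi]].
  apply (ex_PMc M a phi psi); auto. eapply HS; eauto.
Qed.

Lemma d_WO : drule_WO L R.
Proof.
  intros a phi psi H He. destruct (PMc_ex _ _ _ H) as [q [Hm Hi]].
  apply (ex_PMc M a phi q Hm). intro chi.
  apply (cons_cut L (pair L phi q) (pair L psi q)); [|apply Hi].
  intros x [-> | ->].
  - apply (cons_mono L (single L phi)). { intros y Hy; left; exact Hy. } exact He.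
  - apply cons_refl. right; reflexivity.
Qed.

Lemma pair_addf p q chi : Cn L (addf L (single L q) p) chi -> Cn L (pair L p q) chi.
Proof.
  apply cons_mono. intros x [Hx | Hx]; [right; exact Hx | left; exact Hx].
Qed.

Lemma and_l p q : cons L (single L (and_ p q)) p.
Proof. apply (proj2 (HandP p q p)). apply cons_refl. left; reflexivity. Qed.
Lemma and_r p q : cons L (single L (and_ p q)) q.
Proof. apply (proj2 (HandP p q q)). apply cons_refl. right; reflexivity. Qed.

Lemma d_AND : rule_AND L and_ M -> drule_AND L or_ R.
Proof.
  intros HA a phi psi H1 H2.
  destruct (PMc_ex _ _ _ H1) as [q1 [Hm1 Hi1]]. destruct (PMc_ex _ _ _ H2) as [q2 [Hm2 Hi2]].
  apply (ex_PMc M a _ (and_ q1 q2)). { apply HA; auto. }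
  intro chi. apply pair_addf. apply (proj2 (HorS _ _ _ _)). split.
  - apply (cons_cut L _ (pair L phi q1)); [|apply Hi1].
    intros x [-> | ->].
    + apply cons_refl. right; reflexivity.
    + apply (cons_mono L (single L (and_ q1 q2))). { intros y Hy; left; exact Hy. }
      apply and_l.
  - apply (cons_cut L _ (pair L psi q2)); [|apply Hi2].
    intros x [-> | ->].
    + apply cons_refl. right; reflexivity.
    + apply (cons_mono L (single L (and_ q1 q2))). { intros y Hy; left; exact Hy. }
      apply and_r.
Qed.

Definition empty : Fm L -> Prop := fun _ => False.

Lemma or_intro p q : ent1 L p (or_ p q) /\ ent1 L q (or_ p q).
Proof.
  assert (H : Cn L (addf L empty (or_ p q)) (or_ p q)) by (apply cons_refl; right; reflexivity).
  apply HorS in H. destruct H as [H1 H2]. split.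
  - apply (cons_mono L _ _ _ (fun x Hx => match Hx with or_introl f => False_ind _ f | or_intror e => e end) H1).
  - apply (cons_mono L _ _ _ (fun x Hx => match Hx with or_introl f => False_ind _ f | or_intror e => e end) H2).
Qed.

Lemma d_OR : rule_WO L M -> rule_OR L or_ M -> drule_OR L or_ R.
Proof.
  intros HW HO a b phi H1 H2.
  destruct (PMc_ex _ _ _ H1) as [q1 [Hm1 Hi1]]. destruct (PMc_ex _ _ _ H2) as [q2 [Hm2 Hi2]].
  destruct (or_intro q1 q2) as [E1 E2].
  apply (ex_PMc M _ _ (or_ q1 q2)). { apply HO; eapply HW; eauto. }
  intro chi. apply (cons_mono L (addf L (single L phi) (or_ q1 q2))).
  { intros x [Hx | Hx]; [left; exact Hx | right; exact Hx]. }
  apply (proj2 (HorS _ _ _ _)). split.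
  - apply (cons_mono L (pair L phi q1)); [|apply Hi1]. intros x [Hx|Hx]; [left; exact Hx| right; exact Hx].
  - apply (cons_mono L (pair L phi q2)); [|apply Hi2]. intros x [Hx|Hx]; [left; exact Hx| right; exact Hx].
Qed.

Lemma d_CT : rule_CT L and_ M -> drule_CT L and_ M R.
Proof.
  intros HC a phi psi Hm H. destruct (PMc_ex _ _ _ H) as [q [Hq Hi]].
  apply (ex_PMc M a psi q); auto. eapply HC; eauto.
Qed.
End R.
End S.

Theorem corollary4p6 (L : Logic) (and_ or_ : Fm L -> Fm L -> Fm L) (bot top : Fm L)
  (HandP : conj_P L and_) (HorS : disj_S L or_) (HbotP : bot_P L bot)
  (HtopW : top_W L top) (N : Fm L -> Fm L -> Prop) :
  (let R := PMc L (N1 L and_ top N) in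
     drule_top L bot top R /\ drule_SI L R /\ drule_WO L R /\ drule_AND L or_ R) /\
  (let R := PMc L (N2 L and_ or_ top N) in
     drule_top L bot top R /\ drule_SI L R /\ drule_WO L R /\ drule_AND L or_ R /\
     drule_OR L or_ R) /\
  (let M := N3 L and_ top N in let R := PMc L M in
     drule_top L bot top R /\ drule_SI L R /\ drule_WO L R /\ drule_AND L or_ R /\
     drule_CT L and_ M R) /\
  (let M := N4 L and_ or_ top N in let R := PMc L M in
     drule_top L bot top R /\ drule_SI L R /\ drule_WO L R /\ drule_AND L or_ R /\
     drule_OR L or_ R /\ drule_CT L and_ M R).
Proof.
  unfold N1, N2, N3, N4, closed1, closed2, closed3, closed4.
  repeat split; cbv zeta. all: try (
  first
  [ apply d_top; auto; apply cl_top; intros M HM; unfold closed1 in HM; tauto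
  | apply d_SI; apply cl_SI; intros M HM; unfold closed1 in HM; tauto
  | apply d_WO
  | apply (d_AND _ _ _ HandP HorS); apply cl_AND; intros M HM; unfold closed1 in HM; tauto
  | apply (d_OR _ _ HorS); [apply cl_WO | apply cl_OR]; intros M HM; unfold closed1 in HM; tauto
  | apply d_CT; apply cl_CT; intros M HM; unfold closed1 in HM; tauto ]).
Qed.
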